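(* Let $k\le n$ be positive integers, $x^*\in\mathbb{R}^n$ with support $S^*$, $|S^*|\le k$, $\mathcal{X}^0\in\mathbb{R}^n$ and $\eta>0$. Consider the oracle sequence $(S^t,u^t,\mathcal{X}^t)_{t\ge0}$ and the counts $c^t_i$ defined below. For all $i\in S^*$ and all integers $t\ge1$, $$c^t_i\le\frac{2\|\mathcal{X}^0\|_\infty}{\eta|x^*_i|}+1.$$
   Context: $S^*=\{i:x^*_i\neq0\}$. For $v\in\mathbb{R}^n$, $\mathrm{largest}_k(v)$ is the set of indices of the $k$ entries of $v$ with largest absolute value (ties broken by selecting the highest indices). The oracle sequence is defined for all $t\ge0$ by $S^t=\mathrm{largest}_k(\mathcal{X}^t)$, $u^t_i=-\eta x^*_i$ if $i\in S^*\setminus S^t$ and $u^t_i=0$ otherwise, and $\mathcal{X}^{t+1}=\mathcal{X}^t-u^t$. For $i\in\{1,\dots,n\}$, $c^0_i=0$ and, for $t\ge1$, $c^t_i=|\{t'\in\{0,\dots,t-1\}: i\in S^*\setminus S^{t'}\}|$. *)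

(* Defs.v *)
From HB Require Import structures.
From mathcomp Require Import all_boot all_order all_algebra.
From mathcomp Require Import reals.
Set Implicit Arguments. Unset Strict Implicit. Unset Printing Implicit Defensive.
Import Order.TTheory GRing.Theory Num.Theory.
Local Open Scope ring_scope.

Section Oracle.
Variables (R : realType) (n k : nat).

(* Vectors of R^n are functions 'I_n -> R (index i : 'I_n stands for i+1). *)

Definition suppS (x : 'I_n -> R) : {set 'I_n} := [set i | x i != 0].

Definition norm_inf (v : 'I_n -> R) : R := \big[Num.max/0]_(i < n) `|v i|.

(* largest_k v: the k indices ranking highest in the order
   (|v_i|, i) lexicographically, i.e. the k entries of largest absolute value
   with ties broken by selecting the highest indices:
   i is selected iff fewer than k indices j beat it. *)
Definition beats (v : 'I_n -> R) (i : 'I_n) : {set 'I_n} :=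
  [set j : 'I_n | (`|v i| < `|v j|) || ((`|v j| == `|v i|) && (i < j)%N)].
Definition largest_k (v : 'I_n -> R) : {set 'I_n} :=
  [set i : 'I_n | (#|beats v i| < k)%N].

Variables (xstar X0 : 'I_n -> R) (eta : R).

Definition oracle_u (X : 'I_n -> R) : 'I_n -> R :=
  fun i => if (i \in suppS xstar) && (i \notin largest_k X) then - (eta * xstar i) else 0.

Fixpoint oracle_X (t : nat) : 'I_n -> R :=
  match t with
  | 0 => X0
  | t'.+1 => fun i => oracle_X t' i - oracle_u (oracle_X t') i
  end.

Definition oracle_S (t : nat) : {set 'I_n} := largest_k (oracle_X t).

Definition oracle_c (t : nat) (i : 'I_n) : nat :=
  count (fun t' => (i \in suppS xstar) && (i \notin oracle_S t')) (iota 0 t).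

End Oracle.

(* Main.v *)
Require Import Defs.
From HB Require Import structures.
From mathcomp Require Import all_boot all_order all_algebra.
From mathcomp Require Import reals.
Import Order.TTheory GRing.Theory Num.Theory.
Local Open Scope ring_scope.

Theorem lemmaC3 (R : realType) (n k : nat) (hk0 : (0 < k)%N) (hkn : (k <= n)%N)
  (xstar : 'I_n -> R) (hsupp : (#|suppS xstar| <= k)%N)
  (X0 : 'I_n -> R) (eta : R) (heta : 0 < eta)
  (i : 'I_n) (hi : i \in suppS xstar) (t : nat) (ht : (1 <= t)%N) :
  ((oracle_c k xstar X0 eta t i)%:R : R)
    <= 2 * norm_inf X0 / (eta * `|xstar i|) + 1.
Proof.
set M := norm_inf X0.
have hM : forall j, `|X0 j| <= M by move=> j; exact: le_bigmax.
have hM0 : 0 <= M by apply: le_trans (hM i); exact: normr_ge0.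
have Xj : forall s j, j \notin suppS xstar -> oracle_X k xstar X0 eta s j = X0 j.
  move=> s j hj; elim: s => [//|s IH] /=.
  by rewrite /oracle_u (negbTE hj) /= subr0.
have cS : forall s, oracle_c k xstar X0 eta s.+1 i =
   (oracle_c k xstar X0 eta s i + (i \notin oracle_S k xstar X0 eta s))%N.
  move=> s; rewrite /oracle_c -addn1 iotaD count_cat /= hi /= addn0.
  by [].
have Xi : forall s, oracle_X k xstar X0 eta s i =
   X0 i + (oracle_c k xstar X0 eta s i)%:R * (eta * xstar i).
  elim=> [|s IH]; first by rewrite /oracle_c /= mul0r addr0.
  rewrite /= IH cS natrD /oracle_u hi /= /oracle_S.
  case: (i \in largest_k k _) => /=; first by rewrite /= addr0 subr0.
  by rewrite /= opprK mulrDl mul1r addrA.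
have notsel : forall s, i \notin oracle_S k xstar X0 eta s ->
    `|oracle_X k xstar X0 eta s i| <= M.
  move=> s; set v := oracle_X k xstar X0 eta s.
  rewrite /oracle_S /largest_k inE -leqNgt => hb.
  have : ~~ (beats v i \subset suppS xstar :\ i).
    apply/negP => hsub; have := subset_leq_card hsub.
    have hc : (#|suppS xstar :\ i| < k)%N.
      by move: hsupp; rewrite (cardsD1 i) hi add1n.
    move=> h; have : (#|beats v i| < k)%N by apply: leq_ltn_trans h hc.
    by rewrite ltnNge hb.
  case/subsetPn => j hj; rewrite !inE negb_and negbK => hj2.
  move: hj; rewrite inE => /orP hj'.
  have hij : `|v i| <= `|v j|.
    case: hj' => [/ltW //|/andP [/eqP -> _] //].
  case/orP: hj2 => [/eqP eji | hjs].
    by subst j; move: hj'; rewrite ltxx ltnn eqxx /=; case.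
  by apply: (le_trans hij); rewrite /v Xj ?inE //; exact: hM.
have hx : 0 < `|xstar i| by rewrite normr_gt0; move: hi; rewrite inE.
have hex : 0 < eta * `|xstar i| by rewrite mulr_gt0.
have hb0 : 0 <= 2 * M / (eta * `|xstar i|).
  by rewrite divr_ge0 ?mulr_ge0 // ltW.
clear ht; elim: t => [|s IH].
  by rewrite /oracle_c /= ler_wpDl.
rewrite cS natrD.
case: (boolP (i \notin _)) => hns /=; last by rewrite addr0 (le_trans IH) // lerDl.
rewrite lerD2r ler_pdivlMr //.
have := notsel s hns; rewrite Xi => h.
have h2 : `|(oracle_c k xstar X0 eta s i)%:R * (eta * xstar i)| <= 2 * M.
  rewrite -[_ * (eta * _)](addKr (X0 i)).
  apply: (le_trans (ler_normD _ _)); rewrite normrN mulr2n mulrDl mul1r.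
  by rewrite addrC lerD.
by move: h2; rewrite normrM normr_nat normrM (gtr0_norm heta).
Qed.
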